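(* Let $d$ and $\alpha$ be positive integers. There is a constant $C$ depending only on $d$ and $\alpha$ such that: if $P(x)$ is a monic polynomial of degree $d$ with real coefficients and $x_0<x_1<\cdots<x_d$ are integers with $|P(x_i)|\leqslant\alpha$ for every $i\in\{0,\dots,d\}$, then $|x_d-x_0|\leqslant C$. *)

(* Defs.v *)
From mathcomp Require Import all_boot all_order all_algebra.
From mathcomp Require Import reals.

(* Main.v *)
Require Import Defs.
From mathcomp Require Import all_boot all_order all_algebra.
From mathcomp Require Import reals zify ring lra.
Import Order.TTheory GRing.Theory Num.Theory.
Local Open Scope ring_scope.

Lemma interp_coef (F : fieldType) (n : nat) (P : {poly F}) (y : 'I_n.+1 -> F) :
  injective y -> (size P <= n.+1)%N ->
  P`_n = \sum_i P.[y i] / \prod_(j | j != i) (y i - y j).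
Proof.
move=> inj sP.
pose c i := \prod_(j | j != i) (y i - y j).
pose L i := \prod_(j | j != i) ('X - (y j)%:P).
have cE i : c i = (L i).[y i].
  by rewrite /L horner_prod; apply: eq_bigr => j _; rewrite hornerXsubC.
have Ls i k : (L i).[y k] = if k == i then c i else 0.
  case: eqP => [->|/eqP ne]; first by rewrite cE.
  by rewrite horner_prod (bigD1 k) //= hornerXsubC subrr mul0r.
have c0 i : c i != 0.
  by apply/prodf_neq0 => j ji; rewrite subr_eq0 (inj_eq inj) eq_sym.
have sL i : size (L i) = n.+1.
  rewrite /L -big_filter size_prod_XsubC size_filter.
  congr _.+1; transitivity #|predC1 i|; last by rewrite cardC1 card_ord.
  by rewrite cardE /enum_mem size_filter.
have Ln i : (L i)`_n = 1.
  have := lead_coef_prod_XsubC (index_enum 'I_n.+1) (fun j => j != i) y.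
  by rewrite /lead_coef -/(L i) sL.
pose Q := \sum_i (P.[y i] / c i) *: L i.
have PQ : P = Q.
  apply/eqP; rewrite -subr_eq0; apply/eqP.
  apply: (@roots_geq_poly_eq0 _ _ [seq y i | i <- enum 'I_n.+1]).
  - apply/allP => z /mapP [k _ ->]; rewrite /root hornerD hornerN horner_sum.
    rewrite (bigD1 k) //= big1 => [|i ik]; last by rewrite hornerZ Ls eq_sym (negbTE ik) mulr0.
    by rewrite hornerZ Ls eqxx addr0 divfK // subrr.
  - by rewrite map_inj_uniq ?enum_uniq.
  - rewrite size_map size_enum_ord.
    apply: leq_trans (size_polyD _ _) _; rewrite size_polyN geq_max sP /=.
    apply: (big_ind (fun p : {poly F} => size p <= n.+1)%N) => //.
    + by rewrite size_poly0.
    + by move=> p q hp hq; apply: leq_trans (size_polyD _ _) _; rewrite geq_max hp.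
    + by move=> i _; apply: leq_trans (size_scale_leq _ _) _; rewrite sL.
rewrite {1}PQ /Q coef_sum; apply: eq_bigr => i _.
by rewrite coefZ Ln mulr1.
Qed.
Theorem mainTheorem7 (R : realType) (d alpha : nat) :
  (0 < d)%N -> (0 < alpha)%N ->
  exists C : nat,
    forall (P : {poly R}) (x : 'I_d.+1 -> int),
      P \is monic -> size P = d.+1 ->
      (forall i j : 'I_d.+1, (i < j)%N -> x i < x j) ->
      (forall i : 'I_d.+1, `|P.[(x i)%:~R]| <= alpha%:R) ->
      `|x ord_max - x ord0| <= C%:Z.
Proof.
move=> d0 a0; exists (2 * alpha * d.+1)%N => P x mP sP incr hP.
pose y i : R := (x i)%:~R.
have xinj : injective x.
  move=> i j e; case: (ltngtP i j) => [h|h|h].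
  - by have := incr _ _ h; rewrite e ltxx.
  - by have := incr _ _ h; rewrite e ltxx.
  - exact: val_inj.
have yinj : injective y by move=> i j /eqP; rewrite eqr_int => /eqP /xinj.
have := @interp_coef _ _ P y yinj (eq_leq sP).
have -> : P`_d = 1 by move/monicP: mP; rewrite /lead_coef sP.
move=> key.
set D := x ord_max - x ord0.
have D0 : 0 < D by rewrite subr_gt0; apply: incr.
have mono i : x ord0 <= x i <= x ord_max.
  apply/andP; split.
    case: (posnP i) => [h|h]; last exact/ltW/incr.
    by have -> : i = ord0 by apply: val_inj.
  case: (ltnP i d) => h; first exact/ltW/incr.
  have -> : i = ord_max by apply/val_inj => /=; have := ltn_ord i; lia.
  by [].
have m0 : ord_max != ord0 :> 'I_d.+1 by rewrite -val_eqE /= -lt0n.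
have exj i : exists2 j, j != i & D <= 2 * `|x i - x j|.
  case: (eqVneq i ord0) => [->|ni0].
    by exists ord_max => //; rewrite /D; lia.
  case: (eqVneq i ord_max) => [->|nim].
    by exists ord0; rewrite 1?eq_sym //; rewrite /D; lia.
  have := mono i; case: (lerP D (2 * (x i - x ord0))) => h hm.
    by exists ord0; rewrite 1?eq_sym //; move: h hm; rewrite /D; lia.
  by exists ord_max; rewrite 1?eq_sym //; move: h hm; rewrite /D; lia.
have ci i : (D%:~R / 2 : R) <= `|\prod_(j | j != i) (y i - y j)|.
  have [j ji hj] := exj i.
  rewrite normr_prod (bigD1 j) //=.
  have f1 : 1 <= \prod_(k | (k != i) && (k != j)) `|y i - y k|.
    apply: (big_ind (fun v : R => 1 <= v)) => //; first exact: mulr_ege1.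
    move=> k /andP [ki _].
    rewrite /y -rmorphB -intr_norm ler1z.
    have : x i != x k by rewrite (inj_eq xinj) eq_sym.
    lia.
  apply: (le_trans _ (ler_peMr (normr_ge0 _) f1)).
  rewrite /y -rmorphB -intr_norm ler_pdivrMr // -(ler_int R) in hj *.
  by rewrite mulrC rmorphM /= in hj.
have hsum : (1 : R) <= (2 * alpha%:R / D%:~R) *+ d.+1.
  have -> : (2 * alpha%:R / D%:~R) *+ d.+1 = \sum_(i < d.+1) (2 * alpha%:R / D%:~R) :> R by rewrite sumr_const card_ord.
  rewrite -{1}normr1 {1}key.
  apply: le_trans (ler_norm_sum _ _ _) _.
  apply: ler_sum => i _.
  have cpos : 0 < D%:~R / 2 :> R by rewrite divr_gt0 // ltr0z.
  rewrite normrM normfV ler_pdivrMr; last exact: lt_le_trans (ci i).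
  apply: le_trans (hP i) _.
  apply: le_trans (ler_wpM2l _ (ci i)).
    have Dn : D%:~R != 0 :> R by rewrite gt_eqF // ltr0z.
    by rewrite le_eqVlt; apply/orP; left; apply/eqP; field.
  by rewrite divr_ge0 // ?mulr_ge0 // ler0z ltW.
rewrite gtr0_norm // -(ler_int R).
have -> : ((2 * alpha * d.+1)%N%:~R : R) = 2 * alpha%:R * d.+1%:R.
  by change ((2 * alpha * d.+1)%N%:~R : R) with ((2 * alpha * d.+1)%N%:R : R); rewrite !natrM.
by move: hsum; rewrite -mulr_natr mulrAC ler_pdivlMr ?ltr0z // mul1r.
Qed.
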